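(* There is a universal constant $c>0$ such that: for any even integer $n\ge2$, any integer $k>1$, and any reals $G,\lambda>0$ with $G\ge 4\lambda$, there exist functions $f_1,\dots,f_n$ on $\mathbb{R}$ and an initialization $x_0$ satisfying Assumption (A) with parameters $n,\lambda,G$, such that for every step size $0<\eta\le\frac{1}{100\lambda n^2}$, SGD with random reshuffling satisfies \[ \mathbb{E}\Big[F(x_k)-\inf_xF(x)\Big]\;\ge\;c\cdot\min\left\{\lambda,\ \frac{G^2}{\lambda(nk)^2}\right\}. \]
   Context: Assumption (A) (parameters $n\ge 2$, $\lambda>0$, $G>0$, on $\mathbb{R}^d$): $F(x)=\frac1n\sum_{i=1}^n f_i(x)$, where each $f_i:\mathbb{R}^d\to\mathbb{R}$ is a convex quadratic function $f_i(x)=x^\top A_ix+b_i^\top x$ (with $A_i$ symmetric positive semidefinite); $F$ is $\lambda$-strongly convex with unique minimizer $x^*$; each $\nabla f_i$ is $L$-Lipschitz for some $L\le 3\lambda$; each $f_i$ satisfies $\|\nabla f_i(x)\|\le G$ for all $x$ with $\|x-x^*\|\le 1$; and the initialization satisfies $\|x_0-x^*\|\le 1$. SGD with random reshuffling with constant step size $\eta$: for each of $k$ epochs, a fresh uniformly random permutation $\pi$ of $\{1,\dots,n\}$ (independent across epochs) is drawn and the updates $x\leftarrow x-\eta\nabla f_{\pi(j)}(x)$, $j=1,\dots,n$, are performed; $x_t$ is the iterate at the end of epoch $t$. *)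

(* Defs.v *)
From Stdlib Require Import Reals.
From mathcomp Require Import ssreflect ssrfun ssrbool eqtype ssrnat seq
  choice fintype finfun fingroup perm.

Set Implicit Arguments.
Unset Strict Implicit.

(* Components: f_i(x) = a i * x^2 + b i * x on R (d = 1), i = 0..n-1.
   A_i = a i is a 1x1 symmetric PSD matrix iff a i >= 0. *)
Definition fq (a b : nat -> R) (i : nat) (x : R) : R :=
  (a i * x * x + b i * x)%R.

Definition gq (a b : nat -> R) (i : nat) (x : R) : R :=
  (2 * a i * x + b i)%R.

Definition sumR (n : nat) (g : nat -> R) : R :=
  foldr (fun i acc => (g i + acc)%R) 0%R (iota 0 n).

Definition Fobj (n : nat) (a b : nat -> R) (x : R) : R :=
  (/ INR n * sumR n (fun i => fq a b i x))%R.

Definition strongly_convex (lam : R) (F : R -> R) : Prop :=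
  forall x y t : R, (0 <= t <= 1)%R ->
    (F (t * x + (1 - t) * y) <=
       t * F x + (1 - t) * F y - lam / 2 * t * (1 - t) * (x - y) * (x - y))%R.

Definition unique_minimizer (F : R -> R) (xs : R) : Prop :=
  forall y : R, y <> xs -> (F xs < F y)%R.

Definition assumptionA (n : nat) (lam G : R) (a b : nat -> R) (xs x0 : R)
  : Prop :=
  (2 <= n)%N /\ (0 < lam)%R /\ (0 < G)%R /\
  (forall i, (i < n)%N -> (0 <= a i)%R) /\
  strongly_convex lam (Fobj n a b) /\
  unique_minimizer (Fobj n a b) xs /\
  (exists L : R, (L <= 3 * lam)%R /\
     forall i, (i < n)%N -> forall x y : R,
       (Rabs (gq a b i x - gq a b i y) <= L * Rabs (x - y))%R) /\
  (forall i, (i < n)%N -> forall x : R,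
       (Rabs (x - xs) <= 1)%R -> (Rabs (gq a b i x) <= G)%R) /\
  (Rabs (x0 - xs) <= 1)%R.

Definition epoch (n : nat) (a b : nat -> R) (eta : R) (p : 'S_n) (x : R) : R :=
  foldl (fun y (j : 'I_n) => (y - eta * gq a b (nat_of_ord (p j)) y)%R)
        x (enum 'I_n).

Definition rr_iter (n k : nat) (a b : nat -> R) (eta x0 : R)
  (s : {ffun 'I_k -> 'S_n}) : R :=
  foldl (fun y (t : 'I_k) => epoch a b eta (s t) y) x0 (enum 'I_k).

(* expectation over k independent uniformly random permutations:
   uniform average over all k-tuples of permutations *)
Definition expect_rr (n k : nat) (g : {ffun 'I_k -> 'S_n} -> R) : R :=
  (/ INR #|{: {ffun 'I_k -> 'S_n}}| *
   foldr (fun s acc => (g s + acc)%R) 0%R (enum {: {ffun 'I_k -> 'S_n}}))%R.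

(* Main.v *)
Require Import Defs.
From HB Require Import structures.
From Stdlib Require Import Reals Lra Lia Psatz.
From mathcomp Require Import ssreflect ssrfun ssrbool eqtype ssrnat seq
  choice fintype finfun fingroup perm bigop.
Open Scope R_scope.

HB.instance Definition _ := Monoid.isComLaw.Build R 0 Rplus (fun x y z => esym (Rplus_assoc x y z)) Rplus_comm Rplus_0_l.

Definition sumL {T} (l : seq T) (h : T -> R) := foldr (fun s acc => h s + acc) 0 l.

Lemma sumL_big {T} (l : seq T) h : sumL l h = \big[Rplus/0]_(s <- l) h s.
Proof. elim: l => [|x l IH]; first by rewrite big_nil. by rewrite big_cons /= -IH. Qed.

Lemma sumL_map {T U} (l : seq T) (f : T -> U) h : sumL (map f l) h = sumL l (fun x => h (f x)).
Proof. by elim: l => [|x l IH] //=; rewrite -IH. Qed.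

Lemma sumL_add {T} (l : seq T) g h : sumL l (fun x => g x + h x) = sumL l g + sumL l h.
Proof. elim: l => [/=|x l IH]; first lra. rewrite /= IH. rewrite /sumL. lra. Qed.

Lemma sumL_ge {T} (l : seq T) h c : (forall x, h x >= c) -> sumL l h >= INR (size l) * c.
Proof. move=> H; elim: l => [/=|x l IH]; first lra. change (h x + sumL l h >= INR (S (size l)) * c). rewrite S_INR. have := H x. rewrite /sumL in IH *. lra. Qed.

Lemma expect_pair (T : finType) (t0 : T) (phi : T -> T) (g : T -> R) Dv :
  involutive phi -> (forall s, g s + g (phi s) >= 2 * Dv) ->
  / INR #|{: T}| * foldr (fun s acc => g s + acc) 0 (enum {: T}) >= Dv.
Proof.
move=> Hinv H.
have Hp : perm_eq (map phi (enum {: T})) (enum {: T}).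
  apply: uniq_perm.
  - rewrite map_inj_uniq ?enum_uniq //. exact: inv_inj.
  - exact: enum_uniq.
  - move=> x; rewrite mem_enum; apply/mapP; exists (phi x); by rewrite ?mem_enum ?Hinv.
have E : sumL (enum {: T}) (fun s => g (phi s)) = sumL (enum {: T}) g.
  by rewrite -sumL_map !sumL_big (perm_big _ Hp).
have S2 := @sumL_ge _ (enum {: T}) _ _ H.
rewrite sumL_add E in S2.
have Hc : (0 < #|{: T}|)%N by apply/card_gt0P; exists t0.
have HN : 0 < INR #|{: T}| by apply: lt_0_INR; apply/ltP.
rewrite -/(sumL (enum {: T}) g).
have -> : Dv = / INR #|{: T}| * (INR #|{: T}| * Dv) by field; lra.
apply: Rle_ge; apply: Rmult_le_compat_l.
  by apply: Rlt_le; apply: Rinv_0_lt_compat.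
have EN : INR (size (enum {: T})) = INR #|{: T}| by rewrite cardE.
move: S2 EN; set A := INR (size _); set N := INR #|_|; set Sg := sumL _ g. move=> S2 EN. rewrite EN in S2. nra.
Qed.

Lemma rev_iota0 n : rev (iota 0 n) = map (fun i => (n - i.+1)%N) (iota 0 n).
Proof.
elim: n => [//|n IH].
rewrite [in LHS](_ : iota 0 n.+1 = iota 0 n ++ [:: n]); last by rewrite -addn1 iotaD.
rewrite rev_cat /= IH.
have -> : iota 1 n = map (addn 1) (iota 0 n) by rewrite -iotaDl.
rewrite -map_comp subSS subn0.
by congr (_ :: _); apply: eq_map => i /=.

Qed.

Lemma map_rev_ord n : map (@rev_ord n) (enum 'I_n) = rev (enum 'I_n).
Proof.
apply: (@inj_map _ _ val val_inj).
rewrite map_rev val_enum_ord -map_comp rev_iota0.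
rewrite -val_enum_ord -map_comp. by apply: eq_map.
Qed.

Fixpoint geo (r : R) (j : nat) : R :=
  match j with O => 0 | S j => geo r j + r ^ j end.

Lemma geoS r j : geo r (S j) = 1 + r * geo r j.
Proof. elim: j => [/=|j IH]; first lra. change (geo r j.+1 + r^(j.+1) = 1 + r * (geo r j + r^j)). rewrite IH /=. ring. Qed.

Lemma geo_mul r j : (1 - r) * geo r j = 1 - r ^ j.
Proof. elim: j => [/=|j IH]; first ring. rewrite /= Rmult_plus_distr_l IH. ring. Qed.

Definition st (m : nat) (r v : R) (y : R) (i : nat) : R :=
  if (i < m)%N then y - v else r * y + v.
Definition c1 m (l : seq nat) := count (fun i => (m <= i)%N) l.
Definition c0 m (l : seq nat) := count (fun i => (i < m)%N) l.

Lemma aff m r v l x :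
  foldl (st m r v) x l = r ^ (c1 m l) * x + foldl (st m r v) 0 l.
Proof.
elim: l x => [|i l IH] x /=; first ring.
rewrite IH [in RHS]IH /st /c1 /=.
case: ltnP => H /=; rewrite ?add0n ?add1n /=; ring.
Qed.

Lemma powle1 r d : 0 <= r <= 1 -> 0 <= r ^ d <= 1.
Proof.
move=> H; elim: d => [/=|d IH /=]; first lra. nra.
Qed.

Lemma key m r v l d : 0 <= v -> 0 <= r <= 1 ->
  let B := fun l => foldl (st m r v) 0 l in
  B l + r ^ d * B (rev l) >=
  v * ((1 + r ^ d) * geo r (c1 m l) - INR (c0 m l) * (1 + r ^ (c1 m l + d))).
Proof.
move=> Hv Hr B.
elim: l d => [|i l IH] d.
  rewrite /B /c1 /c0 /=. lra.
have E1 : B (i :: l) = r ^ (c1 m l) * st m r v 0 i + B l.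
  by rewrite /B /= aff.
have E2 : B (rev (i :: l)) = st m r v (B (rev l)) i.
  by rewrite /B rev_cons -cats1 foldl_cat.
rewrite E1 E2.
have h1 := powle1 r (c1 m l) Hr. have h2 := powle1 r d Hr.
case: (ltnP i m) => H.
- have -> : c1 m (i :: l) = c1 m l by rewrite /c1 /= leqNgt H.
  have -> : c0 m (i :: l) = S (c0 m l) by rewrite /c0 /= H.
  rewrite /st H S_INR.
  have IHd := IH d.
  rewrite pow_add in IHd *.
  have : r ^ (c1 m l) + r ^ d <= 1 + r ^ (c1 m l) * r ^ d by nra.
  nra.
- have -> : c1 m (i :: l) = S (c1 m l) by rewrite /c1 /= H.
  have -> : c0 m (i :: l) = c0 m l by rewrite /c0 /= ltnNge H.
  rewrite /st ltnNge H /=.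
  have IHd := IH d.+1.
  rewrite addnS /= in IHd. rewrite !pow_add in IHd *.
  have hg := geo_mul r (c1 m l).
  have e2 : v * (r ^ d * (1 - r ^ (c1 m l) - (1 - r) * geo r (c1 m l))) = 0.
    rewrite hg; ring.
  lra.
Qed.

Lemma bern r j : 0 <= r <= 1 -> r ^ j >= 1 - INR j * (1 - r).
Proof.
move=> Hr; elim: j => [/=|j IH]; first lra.
rewrite S_INR /=.
have h : r * (r ^ j - (1 - INR j * (1 - r))) >= 0.
  apply: Rle_ge; apply: Rmult_le_pos; lra.
have := Rmult_le_pos _ _ (pos_INR j) (pow2_ge_0 (1-r)). simpl. nra.
Qed.

Lemma dbound r j : 0 <= r <= 1 -> (INR j * INR j) * (1 - r) <= 1/2 ->
  geo r j - INR j * (1 + r ^ j) / 2 >= INR j * (1 - r) / 4.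
Proof.
move=> Hr; elim: j => [/=|j IH]; first lra.
rewrite S_INR => Hj.
have Hj0 : INR j * INR j * (1 - r) <= 1/2.
  have := pos_INR j. nra.
have IH' := IH Hj0.
have hb := bern r j Hr.
have hj := pos_INR j.
change (geo r j.+1) with (geo r j + r ^ j).
change (r ^ j.+1) with (r * r ^ j).
have h3 : INR j * (INR j + 1) * (1 - r) <= 1/2 by nra.
have h4 : (r ^ j - (1 - INR j * (1 - r))) * (1 + (INR j + 1) * (1 - r)) >= 0.
  apply: Rle_ge; apply: Rmult_le_pos; nra.
nra.
Qed.

Definition aC (m : nat) (lam : R) : nat -> R := fun i => if (i < m)%N then 0 else lam.
Definition bC (m : nat) (G : R) : nat -> R := fun i => if (i < m)%N then G/2 else - (G/2).

Lemma step_eq m lam G eta y i :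
  y - eta * gq (aC m lam) (bC m G) i y = st m (1 - 2*eta*lam) (eta*G/2) y i.
Proof. rewrite /gq /aC /bC /st; case: ifP => _; field. Qed.

Lemma epoch_eq n m lam G eta (p : 'S_n) x :
  epoch (aC m lam) (bC m G) eta p x =
  foldl (st m (1 - 2*eta*lam) (eta*G/2)) x (map (fun j => nat_of_ord (p j)) (enum 'I_n)).
Proof.
rewrite /epoch; elim: (enum 'I_n) x => [//|j l IH] x /=. by rewrite IH step_eq.
Qed.

Lemma counts n m (p : 'S_n) : n = (m+m)%N ->
  c1 m (map (fun j => nat_of_ord (p j)) (enum 'I_n)) = m /\
  c0 m (map (fun j => nat_of_ord (p j)) (enum 'I_n)) = m.
Proof.
move=> Hn.
have Hp : perm_eq (map (fun j => nat_of_ord (p j)) (enum 'I_n)) (iota 0 n).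
  rewrite -val_enum_ord.
  have -> : map (fun j => nat_of_ord (p j)) (enum 'I_n) = map val (map p (enum 'I_n))
    by exact: (map_comp val p _).
  apply: perm_map. apply: uniq_perm.
  - rewrite map_inj_uniq ?enum_uniq //. exact: perm_inj.
  - exact: enum_uniq.
  - move=> x; rewrite mem_enum; apply/mapP; exists (p^-1 x)%g; by rewrite ?mem_enum ?permKV.
rewrite /c1 /c0 !((seq.permP Hp) _) Hn iotaD !count_cat.
have E1 : count (fun i => (m <= i)%N) (iota 0 m) = 0%N.
  rewrite (eq_in_count (a2 := pred0)) ?count_pred0 // => i; rewrite mem_iota add0n => /andP[_ H].
  by rewrite /= leqNgt H.
have E2 : count (fun i => (m <= i)%N) (iota (0 + m) m) = m.
  rewrite (eq_in_count (a2 := predT)) ?count_predT ?size_iota // => i; rewrite mem_iota add0n => /andP[H _].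
  by rewrite /= H.
have E3 : count (fun i => (i < m)%N) (iota 0 m) = m.
  rewrite (eq_in_count (a2 := predT)) ?count_predT ?size_iota // => i; rewrite mem_iota add0n => /andP[_ H].
  by rewrite /= H.
have E4 : count (fun i => (i < m)%N) (iota (0 + m) m) = 0%N.
  rewrite (eq_in_count (a2 := pred0)) ?count_pred0 // => i; rewrite mem_iota add0n => /andP[H _].
  by rewrite /= ltnNge H.
by rewrite E1 E2 E3 E4 add0n addn0.
Qed.

Definition rv (n : nat) : 'S_n := perm (@rev_ord_inj n).

Lemma rv_map n (p : 'S_n) :
  map (fun j => nat_of_ord ((rv n * p)%g j)) (enum 'I_n) =
  rev (map (fun j => nat_of_ord (p j)) (enum 'I_n)).
Proof.
rewrite -map_rev -map_rev_ord -[in RHS]map_comp. apply: eq_map => j /=.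
by rewrite permM permE.
Qed.

Lemma rv_inv n (p : 'S_n) : (rv n * (rv n * p))%g = p.
Proof. apply/permP => j. by rewrite !permM !permE rev_ordK. Qed.

Lemma pair_epoch n m lam G eta (p : 'S_n) x y :
  n = (m+m)%N -> 0 <= eta * G / 2 -> 0 <= 1 - 2*eta*lam <= 1 ->
  epoch (aC m lam) (bC m G) eta p x + epoch (aC m lam) (bC m G) eta (rv n * p)%g y >=
  (1 - 2*eta*lam) ^ m * (x + y) +
  (eta * G / 2) * (2 * geo (1 - 2*eta*lam) m - INR m * (1 + (1 - 2*eta*lam) ^ m)).
Proof.
move=> Hn Hv Hr.
rewrite !epoch_eq rv_map !(aff _ _ _ _ x) (aff _ _ _ _ y) /=.
have := key m (1 - 2*eta*lam) (eta*G/2) (map (fun j => nat_of_ord (p j)) (enum 'I_n)) 0 Hv Hr.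
have [C1 C0] := @counts n m p Hn.
have C1' : c1 m (rev (map (fun j => nat_of_ord (p j)) (enum 'I_n))) = m.
  by rewrite /c1 count_rev.
rewrite C1' C1 C0 addn0 /=.
lra.
Qed.

Lemma iter_pair {I : Type} (e e' : I -> R -> R) q dl : 0 <= q ->
  (forall t z z', e t z + e' t z' >= q * (z + z') + 2 * dl) ->
  forall L x y u, (x + y) / 2 >= u ->
  (foldl (fun z t => e t z) x L + foldl (fun z t => e' t z) y L) / 2 >=
  q ^ (size L) * u + dl * geo q (size L).
Proof.
move=> Hq H; elim => [|t L IH] x y u Hu /=; first lra.
have H1 : (e t x + e' t y) / 2 >= q * u + dl.
  have := H t x y. nra.
have := IH _ _ _ H1. lra.
Qed.

Lemma geo_ge0 q j : 0 <= q -> 0 <= geo q j.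
Proof. move=> Hq; elim: j => [/=|j IH /=]; first lra. have := pow_le q j Hq. lra. Qed.

Lemma sumL_const_in (l : seq nat) h c :
  (forall i, i \in l -> h i = c) -> sumL l h = INR (size l) * c.
Proof.
elim: l => [/= _|x l IH H]; first lra.
change (h x + sumL l h = INR (S (size l)) * c). rewrite S_INR IH.
  rewrite (H x) ?mem_head //. ring.
move=> i Hi; apply: H; by rewrite in_cons Hi orbT.
Qed.

Lemma sumL_cat {T} (l1 l2 : seq T) h : sumL (l1 ++ l2) h = sumL l1 h + sumL l2 h.
Proof. elim: l1 => [/=|x l IH]; first (rewrite /sumL /=; lra). rewrite /= -/(sumL (l ++ l2) h) IH /sumL /=. lra. Qed.

Lemma Fobj_eq n m lam G x : n = (m+m)%N -> (0 < m)%N ->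
  Fobj n (aC m lam) (bC m G) x = lam / 2 * x * x.
Proof.
move=> Hn Hm.
rewrite /Fobj /sumR -/(sumL (iota 0 n) _) Hn iotaD sumL_cat.
rewrite (@sumL_const_in (iota 0 m) _ (G/2 * x)); last first.
  move=> i; rewrite mem_iota add0n => /andP[_ H]. by rewrite /fq /aC /bC H; ring.
rewrite (@sumL_const_in (iota (0+m) m) _ (lam * x * x - G/2 * x)); last first.
  move=> i; rewrite mem_iota add0n => /andP[H _]. by rewrite /fq /aC /bC ltnNge H /=; ring.
rewrite !size_iota plus_INR.
have : 0 < INR m by apply: lt_0_INR; apply/ltP.
move=> hm. field. lra.
Qed.

Lemma abs_le x a : Rabs x <= a <-> - a <= x <= a.
Proof. split_Rabs; split; lra. Qed.

Theorem proposition3 :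
  exists c : R, (0 < c)%R /\
  forall (n k : nat) (lam G : R),
    (2 <= n)%N -> ~~ odd n -> (1 < k)%N ->
    (0 < lam)%R -> (0 < G)%R -> (G >= 4 * lam)%R ->
    exists (a b : nat -> R) (xs x0 : R),
      assumptionA n lam G a b xs x0 /\
      forall eta : R, (0 < eta)%R ->
        (eta <= / (100 * lam * INR n * INR n))%R ->
        (expect_rr (fun s : {ffun 'I_k -> 'S_n} =>
            (Fobj n a b (rr_iter a b eta x0 s) - Fobj n a b xs)%R)
         >= c * Rmin lam (G * G / (lam * (INR n * INR k) * (INR n * INR k))))%R.
Proof.
exists (1/512); split; first lra.
move=> n k lam G Hn2 Hodd Hk Hlam HG HG4.
pose m := n./2.
have Hnm : n = (m + m)%N.
  have H := odd_double_half n. rewrite (negbTE Hodd) add0n in H.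
  by rewrite addnn /m H.
have Hm : (0 < m)%N.
  rewrite lt0n; apply/eqP => H0. rewrite H0 in Hnm. by rewrite Hnm in Hn2.
clearbody m.
have HnR : INR n = 2 * INR m by rewrite Hnm plus_INR; ring.
have HmR : 1 <= INR m.
  replace 1 with (INR 1) by reflexivity. apply: le_INR. by apply/leP.
have HkR : 0 <= INR k := pos_INR k.
have FE : forall x, Fobj n (aC m lam) (bC m G) x = lam/2*x*x := fun x => @Fobj_eq n m lam G x Hnm Hm.
exists (aC m lam), (bC m G), 0, 1.
split.
{ rewrite /assumptionA.
  split; first done. split; first done. split; first done.
  split. move=> i _; rewrite /aC; case: ifP => _; lra.
  split. move=> x y t Ht; rewrite !FE. apply: Req_le; ring.
  split. move=> y Hy; rewrite !FE.
    have := Rsqr_pos_lt y Hy; rewrite /Rsqr => hy. nra.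
  split. exists (2*lam); split; first lra. move=> i _ x y; rewrite /gq /aC /bC; case: ifP => _.
    - have -> : 2*0*x + G/2 - (2*0*y + G/2) = 0 by ring. rewrite Rabs_R0. have := Rabs_pos (x-y); nra.
    - have -> : 2*lam*x + -(G/2) - (2*lam*y + -(G/2)) = 2*lam*(x-y) by ring.
      rewrite Rabs_mult (Rabs_pos_eq (2*lam)); lra.
  split. move=> i _ x; rewrite Rminus_0_r => /abs_le Hx; apply/abs_le; rewrite /gq /aC /bC; case: ifP => _; nra.
  rewrite Rminus_0_r Rabs_R1; lra. }
move=> eta Heta Hetab.
have Hpos : 0 < 100 * lam * INR n * INR n.
  have H2 : 2 <= INR n.
    replace 2 with (INR 2) by reflexivity. apply: le_INR. apply/leP. exact: Hn2.
  repeat apply: Rmult_lt_0_compat; lra.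
have Hel : eta * lam * (INR n * INR n) <= 1/100.
  have := Rmult_le_compat_r _ _ _ (Rlt_le _ _ Hpos) Hetab.
  rewrite Rinv_l; last lra. nra.
have Hm2 : eta * lam * (INR m * INR m) <= 1/400.
  rewrite HnR in Hel. nra.
pose r := 1 - 2*eta*lam. pose v := eta*G/2. pose q := r ^ m.
have Hel0 : 0 < eta * lam by nra.
have Hr : 0 <= r <= 1.
  have Hmm : 1 <= INR m * INR m by nra.
  have Hx : 0 <= eta * lam * (INR m * INR m - 1) by apply: Rmult_le_pos; lra.
  rewrite /r. nra.
have Hv : 0 <= v by rewrite /v; nra.
have Hq : 0 <= q <= 1 := powle1 r m Hr.
pose dl := v * (2 * geo r m - INR m * (1 + q)) / 2.
have Hdl : dl >= eta*eta*lam*G*INR m / 4.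
  have D1 := dbound r m Hr.
  have : INR m * INR m * (1 - r) <= 1/2 by rewrite /r; nra.
  move/D1 => D2. rewrite -/q in D2.
  have D3 : v * (geo r m - INR m * (1 + q) / 2) >= v * (INR m * (1 - r) / 4).
    apply: Rmult_ge_compat_l; lra.
  have -> : dl = v * (geo r m - INR m * (1 + q) / 2). rewrite /dl /q /v /r. field.
  have <- : v * (INR m * (1 - r) / 4) = eta*eta*lam*G*INR m / 4 by rewrite /v /r; field.
  exact D3.
have Hbq : 1 - q <= INR m * (2*eta*lam).
  have := bern r m Hr. rewrite -/q /r. lra.
pose phi := fun s : {ffun 'I_k -> 'S_n} => [ffun t => (rv n * s t)%g].
have Hinv : involutive phi.
  move=> s; apply/ffunP => t; by rewrite !ffunE rv_inv.
pose W := q ^ k * 1 + dl * geo q k.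
have HW : forall s, (rr_iter (aC m lam) (bC m G) eta 1 s + rr_iter (aC m lam) (bC m G) eta 1 (phi s)) / 2 >= W.
  move=> s.
  have H := @iter_pair _ (fun t z => epoch (aC m lam) (bC m G) eta (s t) z)
     (fun t z => epoch (aC m lam) (bC m G) eta (phi s t) z) q dl (proj1 Hq).
  have H1 : forall t z z', epoch (aC m lam) (bC m G) eta (s t) z +
     epoch (aC m lam) (bC m G) eta (phi s t) z' >= q * (z + z') + 2 * dl.
    move=> t z z'. rewrite /phi ffunE.
    have := @pair_epoch n m lam G eta (s t) z z' Hnm Hv Hr. rewrite -/r -/q -/v /dl. move=> Hp. have -> : 2 * (v * (2 * geo r m - INR m * (1 + q)) / 2) = v * (2 * geo r m - INR m * (1 + q)) by field. exact: Hp.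
  have H2 : (1 + 1) / 2 >= 1 by lra.
  have H3 := H H1 (enum 'I_k) 1 1 1 H2.
  rewrite size_enum_ord in H3. exact: H3.
set P := q ^ k.
have HP : 0 <= P <= 1 := powle1 q k Hq.
have HPb : P >= 1 - INR k * (1 - q) := bern q k Hq.
have Hg := geo_mul q k. rewrite -/P in Hg. have Hg0 := @geo_ge0 q k (proj1 Hq).
pose w := eta * G / 8.
have Hw0 : 0 <= w by rewrite /w; nra.
have Hdlw : dl >= w * (1 - q).
  have : w * (1 - q) <= w * (INR m * (2*eta*lam)) by apply: Rmult_le_compat_l.
  have : w * (INR m * (2*eta*lam)) = eta*eta*lam*G*INR m / 4 by rewrite /w; field.
  lra.
have HWw : W >= P + w * (1 - P).
  rewrite /W -/P.
  have : dl * geo q k >= w * (1 - q) * geo q k by apply: Rmult_ge_compat_r; lra.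
  rewrite -Hg. lra.
have HW0 : 0 <= W by nra.
have E : expect_rr (fun s : {ffun 'I_k -> 'S_n} =>
            (Fobj n (aC m lam) (bC m G) (rr_iter (aC m lam) (bC m G) eta 1 s)
             - Fobj n (aC m lam) (bC m G) 0)) >= lam / 2 * W * W.
  rewrite /expect_rr. apply: (@expect_pair _ [ffun _ => 1%g] phi); first exact: Hinv.
  move=> s. rewrite !FE.
  have := HW s.
  set X := rr_iter _ _ _ _ s. set Y := rr_iter _ _ _ _ (phi s).
  move=> HXY.
  have h1 : (X + Y) / 2 * ((X + Y) / 2) >= W * W by nra.
  have h2 : X * X + Y * Y >= 2 * ((X + Y) / 2 * ((X + Y) / 2)).
    have := pow2_ge_0 (X - Y). simpl. nra.
  have h3 : X * X + Y * Y >= 2 * (W * W) by lra.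
  have h4 : lam * (X * X + Y * Y - 2 * (W * W)) >= 0.
    apply: Rle_ge; apply: Rmult_le_pos; lra.
  nra.
apply: Rge_trans E _.
set N := INR n * INR k.
have HN : eta * lam * N = 2 * eta * lam * INR m * INR k by rewrite /N HnR; ring.
have Hmin1 := Rmin_l lam (G * G / (lam * N * N)).
have Hmin2 := Rmin_r lam (G * G / (lam * N * N)).
case: (Rle_lt_dec (eta * lam * N) (1/2)) => Hc.
- have : P >= 1/2.
    have : INR k * (1 - q) <= INR k * (INR m * (2 * eta * lam)) by apply: Rmult_le_compat_l.
    nra.
  move=> HP2.
  have : W >= 1/2 by nra.
  move=> HW2.
  have HWW : W * W >= 1/4 by nra.
  have : lam * (W * W - 1/4) >= 0 by apply: Rle_ge; apply: Rmult_le_pos; lra.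
  lra.
- case: (Rle_lt_dec 1 w) => Hw.
  + have : W >= 1 by nra.
    move=> HW1.
    have HWW : W * W >= 1 by nra.
    have : lam * (W * W - 1) >= 0 by apply: Rle_ge; apply: Rmult_le_pos; lra.
    lra.
  + have HWw2 : W >= w by nra.
    have HNpos : 0 < N by nra.
    have Hwg : w * (16 * lam * N) >= G by rewrite /w; nra.
    have Hsq : G * G <= (w * (16 * lam * N)) * (w * (16 * lam * N)) by nra.
    pose Z := / (lam * N * N).
    have HZ : Z * (lam * N * N) = 1 by rewrite /Z Rinv_l; nra.
    have HZp : 0 < Z by rewrite /Z; apply: Rinv_0_lt_compat; nra.
    have -> : G * G / (lam * N * N) = G * G * Z by rewrite /Z.
    have : G * G * Z <= 256 * lam * w * w.
      have : G * G * Z <= (w * (16 * lam * N)) * (w * (16 * lam * N)) * Z by nra.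
      have -> : (w * (16 * lam * N)) * (w * (16 * lam * N)) * Z = 256 * lam * w * w * (Z * (lam * N * N)) by ring.
      rewrite HZ. lra.
    move=> Hf.
    have HWW : W * W >= w * w by nra.
    have H5 : lam * (W * W - w * w) >= 0 by apply: Rle_ge; apply: Rmult_le_pos; lra.
    have H6 := Rmin_r lam (G * G * Z).
    have H7 : lam * (W * W) - lam * (w * w) >= 0 by lra.
    have H8 : 256 * lam * w * w = 256 * (lam * (w * w)) by ring.
    have H9 : lam / 2 * W * W = (lam * (W * W)) / 2 by field.
    rewrite H9. lra.
Qed.
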